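(* Let $\mathcal{E}$ be a finite nonempty set (of domains), let $h\ge 1$, let $\theta^{*}\in\mathbb{R}^{h}$, and let $\epsilon>0$. For each $e\in\mathcal{E}$ let $\mathcal{R}_{e}:\mathbb{R}^{h}\to\mathbb{R}$ be a function (the risk on domain $e$) satisfying the quadratic bowl assumption: for all $\theta\in\mathbb{R}^h$, $$\mathcal{R}_{e}(\theta)=\mathcal{R}_{e}(\theta^{*})+\tfrac12(\theta-\theta^{*})^{\top}H_{e}(\theta-\theta^{*}),$$ where $H_{e}$ is a symmetric positive definite $h\times h$ matrix with eigenvalues $\lambda_{1}^{e}\ge\cdots\ge\lambda_{h}^{e}>0$. For $A\in\mathcal{E}$, let $N_{A,\theta^{*}}^{\epsilon}$ denote the largest path-connected subset of $\mathbb{R}^h$ containing $\theta^*$ on which $|\mathcal{R}_{A}(\theta)-\mathcal{R}_{A}(\theta^{*})|\le\epsilon$ (i.e. the path-connected component of $\theta^*$ in $\{\theta : |\mathcal{R}_{A}(\theta)-\mathcal{R}_{A}(\theta^{*})|\le\epsilon\}$). For $(A,B)\in\mathcal{E}^2$ define $$\mathcal{I}^{\epsilon}(A,B)=\max_{\theta\in N_{A,\theta^{*}}^{\epsilon}}\left|\mathcal{R}_{B}(\theta)-\mathcal{R}_{A}(\theta^{*})\right|,\qquad R(A,B)=\mathcal{R}_{B}(\theta^{*})-\mathcal{R}_{A}(\theta^{*}),$$ $$H^{\epsilon}(A,B)=\max_{\theta:\ \frac12(\theta-\theta^{*})^{\top}H_{A}(\theta-\theta^{*})\le\epsilon}\ \tfrac12(\theta-\theta^{*})^{\top}H_{B}(\theta-\theta^{*}).$$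 Suppose that for all $(A,B)\in\mathcal{E}^2$ with $R(A,B)<0$ we have $$\epsilon\le -R(A,B)\times\frac{\lambda_{h}^{A}}{\lambda_{1}^{B}}.$$ Then $$\max_{(A,B)\in\mathcal{E}^2}\mathcal{I}^{\epsilon}(A,B)=\max_{(A,B)\in\mathcal{E}^2}\bigl(R(A,B)+H^{\epsilon}(A,B)\bigr).$$
   Context: $\mathcal{I}^{\epsilon}(A,B)$ is called the inconsistency between domains $A$ and $B$ around $\theta^*$; $\lambda_1^{B}$ denotes the largest eigenvalue of $H_B$ and $\lambda_h^{A}$ the smallest eigenvalue of $H_A$. *)

(* Defs.v *)
From HB Require Import structures.
From mathcomp Require Import all_boot all_order all_algebra.
From mathcomp Require Import all_classical all_reals all_analysis.
Set Implicit Arguments. Unset Strict Implicit. Unset Printing Implicit Defensive.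
Import Order.TTheory GRing.Theory Num.Theory.
Import numFieldNormedType.Exports.
Local Open Scope classical_set_scope.
Local Open Scope ring_scope.

Definition qform (R : realType) (h : nat) (M : 'M[R]_h) (v : 'rV[R]_h) : R :=
  (v *m M *m v^T) 0 0.

Definition symmetric_mx (R : realType) (h : nat) (M : 'M[R]_h) : Prop := M^T = M.

Definition posdef_mx (R : realType) (h : nat) (M : 'M[R]_h) : Prop :=
  forall v : 'rV[R]_h, v != 0 -> 0 < qform M v.

Definition largest_eigenvalue (R : realType) (h : nat) (M : 'M[R]_h) (l : R) : Prop :=
  eigenvalue M l /\ forall a, eigenvalue M a -> a <= l.
Definition smallest_eigenvalue (R : realType) (h : nat) (M : 'M[R]_h) (l : R) : Prop :=
  eigenvalue M l /\ forall a, eigenvalue M a -> l <= a.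

Definition path_in (R : realType) (h : nat) (S : set 'rV[R]_h) (x y : 'rV[R]_h) : Prop :=
  exists g : R -> 'rV[R]_h,
    {within `[0, 1], continuous g} /\ g 0 = x /\ g 1 = y /\
    (forall t, t \in `[0, 1] -> S (g t)).

Definition path_component (R : realType) (h : nat) (S : set 'rV[R]_h) (x : 'rV[R]_h)
  : set 'rV[R]_h := [set y | path_in S x y].

Definition is_max (R : realType) (S : set R) (m : R) : Prop :=
  S m /\ forall x, S x -> x <= m.

Section Defs.
Variables (R : realType) (E : finType) (h : nat) (Risk : E -> 'rV[R]_h -> R)
  (H : E -> 'M[R]_h) (thetas : 'rV[R]_h) (eps : R).

Definition Nset (A : E) : set 'rV[R]_h :=
  path_component [set th | `|Risk A th - Risk A thetas| <= eps] thetas.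

Definition Iset (A B : E) : set R :=
  [set `|Risk B th - Risk A thetas| | th in Nset A].

Definition Ieps (A B : E) : R := sup (Iset A B).

Definition Rdiff (A B : E) : R := Risk B thetas - Risk A thetas.

Definition Hset (A B : E) : set R :=
  [set (1/2) * qform (H B) (th - thetas) |
     th in [set th | (1/2) * qform (H A) (th - thetas) <= eps]].

Definition Heps (A B : E) : R := sup (Hset A B).
End Defs.

(* Main.v *)
Require Import Defs.
From HB Require Import structures.
From mathcomp Require Import all_boot all_order all_algebra.
From mathcomp Require Import all_classical all_reals all_analysis.
From mathcomp Require Import ring lra.
Import Order.TTheory GRing.Theory Num.Theory.
Set Implicit Arguments. Unset Strict Implicit. Unset Printing Implicit Defensive.
Import numFieldNormedType.Exports.
Local Open Scope classical_set_scope.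
Local Open Scope ring_scope.

Section Aux.
Variable R : realType.

Lemma cont_sum (I : Type) (s : seq I) (T : topologicalType) (F : I -> T -> R) :
  (forall i, continuous (F i)) -> continuous (fun v => \sum_(i <- s) F i v).
Proof.
move=> cF; elim: s => [|a s IH].
  under eq_fun do rewrite big_nil; exact: cst_continuous.
under eq_fun do rewrite big_cons.
by move=> x; apply: cvgD; [exact: cF | exact: IH].
Qed.

Lemma qformE n (M : 'M[R]_n) v :
  qform M v = \sum_i \sum_j v 0 i * M i j * v 0 j.
Proof.
rewrite /qform mxE exchange_big /=; apply: eq_bigr => j _.
rewrite !mxE big_distrl /=; by apply: eq_bigr => i _.
Qed.

Lemma qform_cont n (M : 'M[R]_n) : continuous (qform M).
Proof.
have -> : qform M = (fun v => \sum_i \sum_j v 0 i * M i j * v 0 j).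
  by apply: funext => v; rewrite qformE.
apply: cont_sum => i; apply: cont_sum => j x.
apply: (@continuousM R _ (fun v : 'rV[R]_n => v 0 i * M i j) (fun v => v 0 j));
  last exact: coord_continuous.
apply: (@continuousM R _ (fun v : 'rV[R]_n => v 0 i) (fun v => M i j));
  first exact: coord_continuous.
exact: cst_continuous.
Qed.

Definition nrm2 n (v : 'rV[R]_n) := qform (1%:M : 'M[R]_n) v.
Arguments nrm2 {n}.

Lemma nrm2E n (v : 'rV[R]_n) : nrm2 v = \sum_j v 0 j ^+ 2.
Proof.
rewrite /nrm2 /qform mulmx1 mxE; apply: eq_bigr => j _.
by rewrite mxE expr2.
Qed.

Lemma nrm2_ge0 n (v : 'rV[R]_n) : 0 <= nrm2 v.
Proof. by rewrite nrm2E; apply: sumr_ge0 => j _; exact: sqr_ge0. Qed.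

Lemma coord_le_nrm2 n (v : 'rV[R]_n) j : v 0 j ^+ 2 <= nrm2 v.
Proof.
rewrite nrm2E (bigD1 j) //= lerDl; apply: sumr_ge0 => i _; exact: sqr_ge0.
Qed.

Lemma nrm2_eq0 n (v : 'rV[R]_n) : nrm2 v = 0 -> v = 0.
Proof.
move=> h0; apply/rowP => j; rewrite mxE; apply/eqP.
by rewrite -sqrf_eq0 eq_le sqr_ge0 andbT -h0 coord_le_nrm2.
Qed.

Lemma qformZ n (M : 'M[R]_n) a v : qform M (a *: v) = a ^+ 2 * qform M v.
Proof.
by rewrite /qform -scalemxAl linearZ /= -scalemxAr -scalemxAl !mxE mulrA expr2.
Qed.

Lemma qform0 n (M : 'M[R]_n) : qform M 0 = 0.
Proof. by rewrite -(scale0r (0 : 'rV_n)) qformZ expr2 !mul0r. Qed.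

Lemma qformN n (M : 'M[R]_n) v : qform (- M) v = - qform M v.
Proof. by rewrite /qform mulmxN mulNmx mxE. Qed.

Lemma qformBs n (M : 'M[R]_n) a v : qform (M - a%:M) v = qform M v - a * nrm2 v.
Proof.
rewrite /nrm2 /qform mulmxBr mulmxBl mxE; congr (_ + _).
by rewrite mxE mul_mx_scalar -scalemxAl mxE mulmx1.
Qed.

Lemma add00 n (A B : 'M[R]_(1, n)) i j : (A + B) i j = A i j + B i j.
Proof. by rewrite mxE. Qed.

Lemma qformD n (M : 'M[R]_n) u w : M^T = M ->
  qform M (u + w) = qform M u + 2 * (u *m M *m w^T) 0 0 + qform M w.
Proof.
move=> sM.
have e : (w *m M *m u^T) 0 0 = (u *m M *m w^T) 0 0.
  have -> : (w *m M *m u^T) 0 0 = (w *m M *m u^T)^T 0 0 by rewrite [RHS]mxE.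
  by rewrite !trmx_mul trmxK sM mulmxA.
rewrite /qform linearD /= !mulmxDl !mulmxDr !add00 e.
set a := (u *m M *m u^T) 0 0; set b := (u *m M *m w^T) 0 0.
by rewrite mulr2n mulrDl mul1r !addrA.
Qed.


Lemma nrm2_gt0 n (v : 'rV[R]_n) : v != 0 -> 0 < nrm2 v.
Proof.
move=> nz; rewrite lt_def nrm2_ge0 andbT; apply/eqP => /nrm2_eq0 h0.
by rewrite h0 eqxx in nz.
Qed.

Lemma nrm2_0 n : nrm2 (0 : 'rV[R]_n) = 0.
Proof. exact: qform0. Qed.

Lemma normalize n (v : 'rV[R]_n) : v != 0 ->
  nrm2 ((Num.sqrt (nrm2 v))^-1 *: v) = 1.
Proof.
move=> nz; have p := nrm2_gt0 nz.
rewrite /nrm2 qformZ -/(nrm2 v) exprVn sqr_sqrtr ?ltW // mulVf //.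
by rewrite gt_eqF.
Qed.

Lemma stat_zero n (N : 'M[R]_n) v0 : N^T = N -> (forall v, qform N v <= 0) ->
  qform N v0 = 0 -> v0 *m N = 0.
Proof.
move=> sN neg z; set u := v0 *m N.
set c := nrm2 u; set d := qform N u.
have cE : (v0 *m N *m u^T) 0 0 = c by rewrite /c /nrm2 /qform mulmx1.
have key : forall t, 2 * t * c + t ^+ 2 * d <= 0.
  move=> t; have := neg (v0 + t *: u).
  rewrite qformD // z qformZ -/d linearZ /= -scalemxAr mxE cE add0r.
  by rewrite mulrA [2 * t]mulrC.
have c0 : c <= 0.
  rewrite leNgt; apply/negP => cp.
  set k := `|d| + 1.
  have kp : 0 < k by rewrite /k ltr_pwDr // normr_ge0.
  set t := c / k.
  have tp : 0 < t by rewrite divr_gt0.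
  have ct : c = t * k by rewrite /t divfK // gt_eqF.
  have := key t; rewrite ct.
  have : 0 < t ^+ 2 * (2 * k + d).
    apply: mulr_gt0; first by rewrite exprn_gt0.
    rewrite /k; have := ler_normr d; have := normr_ge0 d.
    case/orP: (le_total 0 d) => hd; rewrite ?(ger0_norm hd) ?(ler0_norm hd) => *; lra.
  move=> h1 h2.
  have : 2 * t * (t * k) + t ^+ 2 * d = t ^+ 2 * (2 * k + d) by rewrite expr2; ring.
  lra.
have : c = 0 by apply/eqP; rewrite eq_le c0 nrm2_ge0.
exact: nrm2_eq0.
Qed.

Lemma bnd_compact n (A : set 'rV[R]_n) (C : R) : 0 <= C ->
  (forall v, A v -> nrm2 v <= C) -> closed A -> compact A.
Proof.
move=> C0 bA cA; apply: bounded_closed_compact => //.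
exists (C + 1); split; first by rewrite realE; apply/orP; left; rewrite addr_ge0.
move=> M hM x Ax /=.
change (mx_norm x <= M); rewrite mx_normrE; apply: bigmax_le.
  by apply: le_trans (ltW hM); rewrite addr_ge0.
case=> i j _ /=; rewrite (ord1 i).
apply: le_trans (ltW hM).
have h1 := le_trans (coord_le_nrm2 x j) (bA x Ax).
case: (lerP `|x 0 j| 1) => h; first by lra.
have : `|x 0 j| <= `|x 0 j| ^+ 2.
  by rewrite expr2 ler_peMr // ?ltW // (lt_trans ltr01 h).
rewrite real_normK ?num_real // => h2; lra.
Qed.

Lemma ray_max n (M : 'M[R]_n) : (0 < n)%N -> M^T = M ->
  exists m, eigenvalue M m /\ forall v, qform M v <= m * nrm2 v.
Proof.
move=> n0 sM.
set S := [set v : 'rV[R]_n | nrm2 v = 1].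
have S0 : S !=set0.
  have nz : (const_mx 1 : 'rV[R]_n) != 0.
    apply/eqP => /rowP/(_ (Ordinal n0)); rewrite !mxE => /eqP.
    by rewrite oner_eq0.
  by exists ((Num.sqrt (nrm2 (const_mx 1 : 'rV[R]_n)))^-1 *: const_mx 1); exact: normalize.
have cS : compact S.
  apply: (@bnd_compact _ _ 1) => //; first by move=> v ->.
  apply: (@preimage_closed _ _ nrm2 [set 1]); last exact: closed_eq.
  by move=> x _; exact: qform_cont.
have [v0 v0S v0max] := EVT_max_rV S0 cS (continuous_subspaceT (@qform_cont _ M)).
move: v0S; rewrite inE /S /= => v0S.
set m := qform M v0.
have bnd : forall v, qform M v <= m * nrm2 v.
  move=> v; have [->|nz] := eqVneq v 0; first by rewrite qform0 nrm2_0 mulr0.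
  have := v0max _ (mem_set (normalize nz)).
  rewrite qformZ -/m exprVn sqr_sqrtr ?nrm2_ge0 // ler_pdivrMl ?nrm2_gt0 //.
  by rewrite mulrC.
exists m; split => //.
have zero : v0 *m (M - m%:M) = 0.
  apply: stat_zero.
  - by rewrite linearB /= tr_scalar_mx sM.
  - by move=> v; rewrite qformBs subr_le0.
  - by rewrite qformBs v0S mulr1 subrr.
apply/eigenvalueP; exists v0.
  by apply/eqP; rewrite -subr_eq0 -mul_mx_scalar -mulmxBr zero.
by apply/eqP => h0; move: v0S; rewrite h0 nrm2_0 => /eqP; rewrite eq_sym oner_eq0.
Qed.

End Aux.
Lemma sup_is_max (R : realType) (S : set R) m :
  S m -> (forall x, S x -> x <= m) -> sup S = m.
Proof.
move=> Sm ub; apply/eqP; rewrite eq_le; apply/andP; split.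
  by apply: ge_sup; [exists m | move=> x /ub].
by apply: sup_upper_bound => //; split; [exists m | exists m => x /ub].
Qed.

Lemma ray_upper (R : realType) n (M : 'M[R]_n) l : (0 < n)%N -> M^T = M ->
  largest_eigenvalue M l -> forall v, qform M v <= l * nrm2 v.
Proof.
move=> n0 sM [_ lmax] v; have [m [em bm]] := ray_max n0 sM.
apply: le_trans (bm v) _; apply: ler_wpM2r; [exact: nrm2_ge0 | exact: lmax].
Qed.

Lemma ray_lower (R : realType) n (M : 'M[R]_n) l : (0 < n)%N -> M^T = M ->
  smallest_eigenvalue M l -> forall v, l * nrm2 v <= qform M v.
Proof.
move=> n0 sM [_ lmin] v.
have sN : (- M)^T = - M by rewrite linearN /= sM.
have [m [em bm]] := ray_max n0 sN.
have em' : eigenvalue M (- m).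
  move/eigenvalueP: em => [w hw nz]; apply/eigenvalueP; exists w => //.
  by rewrite scaleNr -hw mulmxN opprK.
have := bm v; rewrite qformN => h.
have := lmin _ em'; have := nrm2_ge0 v => h1 h2.
have : l * nrm2 v <= - m * nrm2 v by apply: ler_wpM2r.
lra.
Qed.

Lemma lamh_pos (R : realType) n (M : 'M[R]_n) l :
  posdef_mx M -> smallest_eigenvalue M l -> 0 < l.
Proof.
move=> pd [el _]; move/eigenvalueP: el => [w hw nz].
have := pd w nz; rewrite /qform hw -scalemxAl mxE.
have := nrm2_gt0 nz; rewrite /nrm2 /qform mulmx1.
by move=> h1 h2; rewrite pmulr_lgt0 in h2.
Qed.

Lemma line_cont (R : realType) n (a v : 'rV[R]_n) :
  continuous (fun t : R => a + t *: v).
Proof.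
move=> t; apply: cvgD; first exact: cvg_cst.
by apply: continuousZr_tmp => //; exact: cvg_id.
Qed.

Lemma Nset_char (R : realType) (E : finType) n (Risk : E -> 'rV[R]_n -> R)
  (H : E -> 'M[R]_n) thetas eps A :
  (forall e, forall v, 0 <= qform (H e) v) ->
  (forall e th, Risk e th = Risk e thetas + (1/2) * qform (H e) (th - thetas)) ->
  forall th, Nset Risk thetas eps A th <-> (1/2) * qform (H A) (th - thetas) <= eps.
Proof.
move=> q0 hR th; split.
  move=> [g [_ [_ [g1 gS]]]].
  have := gS 1; rewrite in_itv /= ler01 lexx g1 /= hR addrC addKr => /(_ isT) h'.
  rewrite ger0_norm in h' => //.
  by apply: mulr_ge0 => //; apply: q0.
move=> hth; exists (fun t => thetas + t *: (th - thetas)); split.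
  apply: continuous_subspaceT => x; exact: line_cont.
split; first by rewrite scale0r addr0.
split; first by rewrite scale1r addrC subrK.
move=> t; rewrite in_itv /= => /andP[t0 t1].
rewrite hR addrC addKr (addrC thetas) addrK qformZ.
rewrite ger0_norm; last by apply: mulr_ge0 => //; apply: mulr_ge0 => //; rewrite sqr_ge0.
apply: le_trans hth.
rewrite mulrCA.
have := q0 A (th - thetas) => hq.
have ht : t ^+ 2 <= 1 by rewrite expr_le1.
rewrite -[X in _ <= X]mul1r; apply: ler_wpM2r => //.
by apply: mulr_ge0.
Qed.

Lemma pair_facts (R : realType) (E : finType) (h : nat)
  (Risk : E -> 'rV[R]_h -> R) (H : E -> 'M[R]_h) (lam1 lamh : E -> R)
  (thetas : 'rV[R]_h) (eps : R) :
  (1 <= h)%N ->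
  0 < eps ->
  (forall e, symmetric_mx (H e) /\ posdef_mx (H e)) ->
  (forall e, largest_eigenvalue (H e) (lam1 e)) ->
  (forall e, smallest_eigenvalue (H e) (lamh e)) ->
  (forall e th, Risk e th = Risk e thetas + (1/2) * qform (H e) (th - thetas)) ->
  (forall A B, Rdiff Risk thetas A B < 0 ->
     eps <= - Rdiff Risk thetas A B * (lamh A / lam1 B)) ->
  forall A B,
  is_max (Iset Risk thetas eps A B) (Ieps Risk thetas eps A B) /\
  is_max (Hset H thetas eps A B) (Heps H thetas eps A B) /\
  Ieps Risk thetas eps A B = (if 0 <= Rdiff Risk thetas A B
     then Rdiff Risk thetas A B + Heps H thetas eps A B
     else - Rdiff Risk thetas A B) /\
  0 <= Heps H thetas eps A B /\
  (Rdiff Risk thetas A B < 0 -> Heps H thetas eps A B <= - Rdiff Risk thetas A B).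
Proof.
move=> h0 eps0 sp larg small hR hyp A B.
have hup e := ray_upper h0 (sp e).1 (larg e).
have hlow e := ray_lower h0 (sp e).1 (small e).
have hpos e := lamh_pos (sp e).2 (small e).
have hq0 e v : 0 <= qform (H e) v.
  exact: le_trans (mulr_ge0 (ltW (hpos e)) (nrm2_ge0 v)) (hlow e v).
have hl1 e : 0 < lam1 e := lt_le_trans (hpos e) ((larg e).2 _ (small e).1).
set K := [set v : 'rV[R]_h | qform (H A) v <= 2 * eps].
have K0 : K !=set0 by exists 0; rewrite /K /= qform0; lra.
have cK : compact K.
  apply: (@bnd_compact _ _ _ (2 * eps / lamh A)).
  - by apply: divr_ge0; [lra | exact: ltW].
  - move=> v Kv; rewrite ler_pdivlMr // mulrC; exact: le_trans (hlow A v) Kv.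
  - apply: (@preimage_closed _ _ (qform (H A)) [set x : R | x <= 2 * eps]); last exact: closed_le.
    by move=> x _; exact: qform_cont.
have [v0 v0K v0max] := EVT_max_rV K0 cK (continuous_subspaceT (@qform_cont _ _ (H B))).
move: v0K; rewrite inE /K /= => v0K.
set Mv := 1/2 * qform (H B) v0.
have Hmax : is_max (Hset H thetas eps A B) Mv.
  split.
    exists (v0 + thetas); last by rewrite addrK.
    by rewrite /= addrK; lra.
  move=> _ [th hth <-]; rewrite /Mv ler_wpM2l //.
  apply: v0max; rewrite inE /K /=; move: hth => /=; lra.
have HE : Heps H thetas eps A B = Mv by apply: sup_is_max; case: Hmax.
have Mv0 : 0 <= Mv by rewrite /Mv mulr_ge0.
set Rd := Rdiff Risk thetas A B.
have IE : forall th, Risk B th - Risk A thetas = Rd + 1/2 * qform (H B) (th - thetas).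
  by move=> th; rewrite /Rd /Rdiff hR; ring.
have Nch := @Nset_char R E h Risk H thetas eps A hq0 hR.
have sle : forall th, Nset Risk thetas eps A th -> 1/2 * qform (H B) (th - thetas) <= Mv.
  move=> th /Nch hth; rewrite /Mv ler_wpM2l //.
  apply: v0max; rewrite inE /K /=; lra.
have sge : forall th, 0 <= 1/2 * qform (H B) (th - thetas) by move=> th; rewrite mulr_ge0.
have MvR : Rd < 0 -> Mv <= - Rd.
  move=> hRd'.
  have := hyp A B hRd'; rewrite -/Rd => he.
  have hu := hup B v0; have hl := hlow A v0; have hn := nrm2_ge0 v0.
  have la := hpos A; have lb := hl1 B.
  have e1 : eps * lam1 B <= - Rd * lamh A.
    by rewrite mulrA ler_pdivlMr in he.
  have e2 : lamh A * nrm2 v0 <= 2 * eps by lra.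
  have e3 : lam1 B * (lamh A * nrm2 v0) <= lam1 B * (2 * eps) by rewrite ler_wpM2l // ltW.
  have e4 : lamh A * qform (H B) v0 <= lamh A * (lam1 B * nrm2 v0) by rewrite ler_wpM2l // ltW.
  have e5 : lamh A * (2 * Mv) <= lamh A * (2 * - Rd).
    rewrite /Mv; apply: le_trans (_ : _ <= lamh A * (lam1 B * nrm2 v0)) _.
      by have -> : 2 * (1/2 * qform (H B) v0) = qform (H B) v0 by field.
    have : lamh A * (lam1 B * nrm2 v0) = lam1 B * (lamh A * nrm2 v0) by ring.
    move=> ->; apply: le_trans e3 _; lra.
  rewrite ler_pM2l // in e5; lra.
have Imax : is_max (Iset Risk thetas eps A B) (if 0 <= Rd then Rd + Mv else - Rd).
  case: ifP => hRd.
    split.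
      exists (v0 + thetas); first by apply/Nch; rewrite addrK; lra.
      by rewrite IE addrK ger0_norm //; apply: addr_ge0.
    move=> _ [th hth <-]; rewrite IE ger0_norm; last exact: addr_ge0.
    by rewrite lerD2l; apply: sle.
  have hRd' : Rd < 0 by move/negbT: hRd; rewrite -ltNge.
  have MvR' := MvR hRd'.
  split.
    exists thetas; first by apply/Nch; rewrite subrr qform0; lra.
    by rewrite IE subrr qform0 mulr0 addr0 ltr0_norm.
  move=> _ [th hth <-]; rewrite IE.
  have := sle _ hth; have := sge th => a b.
  rewrite ler_norml; apply/andP; split; lra.
have IEq : Ieps Risk thetas eps A B = (if 0 <= Rd then Rd + Mv else - Rd) by apply: sup_is_max; case: Imax.
by rewrite IEq HE; split.
Qed.

Lemma fin_argmax (R : realType) (I : finType) (i0 : I) (G : I -> R) :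
  exists p1, forall p, G p <= G p1.
Proof.
case: (@arg_maxP _ R I i0 xpredT G isT) => p1 _ hp.
by exists p1 => p; apply: hp.
Qed.

Theorem mainTheorem1 (R : realType) (E : finType) (h : nat)
  (Risk : E -> 'rV[R]_h -> R) (H : E -> 'M[R]_h) (lam1 lamh : E -> R)
  (thetas : 'rV[R]_h) (eps : R) :
  (0 < #|E|)%N ->
  (1 <= h)%N ->
  0 < eps ->
  (forall e, symmetric_mx (H e) /\ posdef_mx (H e)) ->
  (forall e, largest_eigenvalue (H e) (lam1 e)) ->
  (forall e, smallest_eigenvalue (H e) (lamh e)) ->
  (forall e th, Risk e th = Risk e thetas + (1/2) * qform (H e) (th - thetas)) ->
  (forall A B, Rdiff Risk thetas A B < 0 ->
     eps <= - Rdiff Risk thetas A B * (lamh A / lam1 B)) ->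
  (forall A B, is_max (Iset Risk thetas eps A B) (Ieps Risk thetas eps A B)) /\
  (forall A B, is_max (Hset H thetas eps A B) (Heps H thetas eps A B)) /\
  exists m : R,
    is_max [set Ieps Risk thetas eps p.1 p.2 | p in [set: E * E]] m /\
    is_max [set Rdiff Risk thetas p.1 p.2 + Heps H thetas eps p.1 p.2
             | p in [set: E * E]] m.
Proof.
move=> hE h0 eps0 sp larg small hR hyp.
have PF := @pair_facts R E h Risk H lam1 lamh thetas eps h0 eps0 sp larg small hR hyp.
split; first by move=> A B; case: (PF A B).
split; first by move=> A B; case: (PF A B) => _ [].
case/card_gt0P: hE => e0 _.
set G := fun p : E * E => Rdiff Risk thetas p.1 p.2 + Heps H thetas eps p.1 p.2.
have [p1 hp1] := fin_argmax (e0, e0) G.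
have Rself : forall A, Rdiff Risk thetas A A = 0 by move=> A; rewrite /Rdiff subrr.
have Rswap : forall A B, Rdiff Risk thetas B A = - Rdiff Risk thetas A B.
  by move=> A B; rewrite /Rdiff opprB.
exists (G p1); split; last first.
  split; first by exists p1.
  by move=> _ [p _ <-]; apply: hp1.
split.
  case: (PF p1.1 p1.2) => _ [_ [IE [H0 _]]].
  case: (boolP (0 <= Rdiff Risk thetas p1.1 p1.2)) => hR0.
    by exists p1 => //; rewrite IE hR0.
  exists (p1.1, p1.1) => //=.
  case: (PF p1.1 p1.1) => _ [_ [IE' [H0' _]]].
  rewrite IE' Rself lexx add0r.
  have hle := hp1 (p1.1, p1.1); rewrite /G /= Rself add0r in hle.
  apply/eqP; rewrite eq_le hle /=.
  (* G p1 <= 0 <= Heps *)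
  have hRd : Rdiff Risk thetas p1.1 p1.2 < 0 by rewrite ltNge.
  case: (PF p1.1 p1.2) => _ [_ [_ [_ hM]]].
  have := hM hRd; rewrite /G /=; lra.
move=> _ [p _ <-].
case: (PF p.1 p.2) => _ [_ [IE [H0 _]]].
rewrite IE; case: ifP => hR0; first exact: hp1.
apply: le_trans (hp1 (p.2, p.1)); rewrite /G /= Rswap.
case: (PF p.2 p.1) => _ [_ [_ [H1 _]]]; lra.
Qed.
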